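(* Let $E$ be an $AL$-space and let $F$ be a reflexive Banach lattice. Then every order bounded sequentially $uaw$-compact operator $T\colon E\to F$ has a weakly compact modulus $|T|$.
   Context: A net $(x_\alpha)$ in a Banach lattice $G$ is $uaw$-convergent to $x$ if $|x_\alpha-x|\wedge u\to 0$ weakly for every $u\in G_+$. A bounded operator $T\colon X\to G$ from a Banach space into a Banach lattice is sequentially $uaw$-compact if for every bounded sequence $(x_n)$ in $X$, the sequence $(Tx_n)$ has a subsequence that is $uaw$-convergent in $G$. *)

(* Defs.v *)
From HB Require Import structures.
From mathcomp Require Import all_boot all_order all_algebra.
From mathcomp Require Import all_classical all_reals all_analysis.
Set Implicit Arguments. Unset Strict Implicit. Unset Printing Implicit Defensive.
Import Order.TTheory GRing.Theory Num.Theory.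
Import numFieldNormedType.Exports.
Local Open Scope classical_set_scope.
Local Open Scope ring_scope.

Section BanachLattice.
Context {R : realType}.

Record banach_lattice (V : completeNormedModType R) := BanachLattice {
  bl_le : V -> V -> Prop;
  bl_join : V -> V -> V;
  bl_le_refl : forall x, bl_le x x;
  bl_le_anti : forall x y, bl_le x y -> bl_le y x -> x = y;
  bl_le_trans : forall x y z, bl_le x y -> bl_le y z -> bl_le x z;
  bl_join_ubl : forall x y, bl_le x (bl_join x y);
  bl_join_ubr : forall x y, bl_le y (bl_join x y);
  bl_join_lub : forall x y z, bl_le x z -> bl_le y z -> bl_le (bl_join x y) z;
  bl_le_add : forall x y z, bl_le x y -> bl_le (x + z) (y + z);
  bl_le_scale : forall (a : R) x, 0 <= a -> bl_le 0 x -> bl_le 0 (a *: x);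
  bl_norm_mono : forall x y,
    bl_le (bl_join x (- x)) (bl_join y (- y)) -> `|x| <= `|y|
}.

Context {V : completeNormedModType R} (L : banach_lattice V).

Definition bl_abs (x : V) : V := bl_join L x (- x).
Definition bl_meet (x y : V) : V := - bl_join L (- x) (- y).

Definition is_dual_elt (f : V -> R) : Prop :=
  [/\ forall x y, f (x + y) = f x + f y,
      forall (a : R) x, f (a *: x) = a * f x
    & continuous f].

Definition weakly_cvg (z : nat -> V) (y : V) : Prop :=
  forall f, is_dual_elt f -> f (z n) @[n --> \oo] --> f y.

Definition uaw_cvg (z : nat -> V) (y : V) : Prop :=
  forall u, bl_le L 0 u -> weakly_cvg (fun n => bl_meet (bl_abs (z n - y)) u) 0.

(** the weak topology sigma(V, V'): initial topology of the evaluation map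
    into the product (pointwise) topology on V' -> R *)
Definition dual_space := {f : V -> R | is_dual_elt f}.
Definition weak_eval (x : V) : {ptws dual_space -> R} := fun f => sval f x.
Definition weakV := initial_topology weak_eval.

Definition rel_weakly_compact (A : set V) : Prop :=
  compact (closure (A : set weakV)).

(** reflexivity: the canonical embedding V -> V'' is onto.  An element of V''
    is a linear functional on V' bounded w.r.t. the dual norm, i.e.
    |phi f| <= C ||f|| whenever ||f|| <= M. *)
Definition reflexive_space : Prop :=
  forall phi : (V -> R) -> R,
    (forall f g, is_dual_elt f -> is_dual_elt g ->
       phi (fun x => f x + g x) = phi f + phi g) ->
    (forall (a : R) f, is_dual_elt f -> phi (fun x => a * f x) = a * phi f) ->
    (exists C : R, forall f (M : R), is_dual_elt f -> 0 <= M ->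
       (forall x, `|f x| <= M * `|x|) -> `|phi f| <= C * M) ->
    exists x : V, forall f, is_dual_elt f -> phi f = f x.

Definition AL_space : Prop :=
  forall x y, bl_le L 0 x -> bl_le L 0 y -> `|x + y| = `|x| + `|y|.

End BanachLattice.
Arguments reflexive_space {R} V.

Section Operators.
Context {R : realType} {E F : completeNormedModType R}.

Definition order_bounded (LE : banach_lattice E) (LF : banach_lattice F) (T : E -> F) : Prop :=
  forall a b, exists c d, forall x, bl_le LE a x -> bl_le LE x b ->
    bl_le LF c (T x) /\ bl_le LF (T x) d.

Definition seq_uaw_compact (LE : banach_lattice E) (LF : banach_lattice F) (T : E -> F) : Prop :=
  forall x : nat -> E, (exists M : R, forall n, `|x n| <= M) ->
    exists phi : nat -> nat, (forall n, (phi n < phi n.+1)%N) /\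
      exists y, uaw_cvg LF (fun n => T (x (phi n))) y.

Definition op_le (LE : banach_lattice E) (LF : banach_lattice F) (T S : E -> F) : Prop :=
  forall x, bl_le LE 0 x -> bl_le LF (T x) (S x).

Definition is_modulus (LE : banach_lattice E) (LF : banach_lattice F) (T S : {linear E -> F}) : Prop :=
  [/\ op_le LE LF T S, op_le LE LF (fun x => - T x) S,
      order_bounded LE LF S &
      forall U : {linear E -> F}, order_bounded LE LF U ->
        op_le LE LF T U -> op_le LE LF (fun x => - T x) U -> op_le LE LF S U].

Definition weakly_compact_op (S : E -> F) : Prop :=
  rel_weakly_compact (S @` [set x : E | `|x| <= 1]).

End Operators.
Arguments weakly_compact_op {R E F} S.

(* Main.v *)
Require Import Defs.
From HB Require Import structures.
From mathcomp Require Import all_boot all_order all_algebra.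
From mathcomp Require Import all_classical all_reals all_analysis.
From mathcomp Require Import ring lra.
Import Order.TTheory GRing.Theory Num.Theory.
Import numFieldNormedType.Exports.
Local Open Scope classical_set_scope.
Local Open Scope ring_scope.
Set Implicit Arguments. Unset Strict Implicit. Unset Printing Implicit Defensive.
Section Lat.
Context {R : realType} {V : completeNormedModType R} (L : banach_lattice V).
Local Notation "x ⊑ y" := (bl_le L x y) (at level 70).
Local Notation "x ⊔ y" := (bl_join L x y) (at level 50).

Lemma lrefl x : x ⊑ x. Proof. exact: bl_le_refl. Qed.
Lemma ltr x y z : x ⊑ y -> y ⊑ z -> x ⊑ z. Proof. exact: bl_le_trans. Qed.
Lemma lanti x y : x ⊑ y -> y ⊑ x -> x = y. Proof. exact: bl_le_anti. Qed.
Lemma laddr x y z : x ⊑ y -> x + z ⊑ y + z. Proof. exact: bl_le_add. Qed.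
Lemma laddl x y z : x ⊑ y -> z + x ⊑ z + y.
Proof. by move=> h; rewrite ![z + _]addrC; apply: laddr. Qed.
Lemma laddrE x y z : x + z ⊑ y + z -> x ⊑ y.
Proof. by move=> /(laddr (- z)); rewrite !addrK. Qed.
Lemma lopp x y : x ⊑ y -> - y ⊑ - x.
Proof.
move=> /(laddr (- x - y)).
have -> : x + (- x - y) = - y by rewrite addrA subrr add0r.
by have -> : y + (- x - y) = - x by rewrite addrCA subrr addr0.
Qed.
Lemma loppE x y : - y ⊑ - x -> x ⊑ y.
Proof. by move=> /lopp; rewrite !opprK. Qed.
Lemma lsub0 x y : x ⊑ y -> 0 ⊑ y - x.
Proof. by move=> /(laddr (- x)); rewrite subrr. Qed.
Lemma lsub0E x y : 0 ⊑ y - x -> x ⊑ y.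
Proof. by move=> /(laddr x); rewrite add0r subrK. Qed.
Lemma ladd a b c d : a ⊑ b -> c ⊑ d -> a + c ⊑ b + d.
Proof. by move=> h1 h2; apply: (ltr (laddr c h1)); apply: laddl. Qed.
Lemma lscale (a : R) x y : 0 <= a -> x ⊑ y -> a *: x ⊑ a *: y.
Proof.
move=> a0 /lsub0 h; apply: lsub0E; rewrite -scalerBr; exact: bl_le_scale.
Qed.
Lemma lscale0 (a : R) x : 0 <= a -> 0 ⊑ x -> 0 ⊑ a *: x.
Proof. exact: bl_le_scale. Qed.
Lemma ljl x y : x ⊑ x ⊔ y. Proof. exact: bl_join_ubl. Qed.
Lemma ljr x y : y ⊑ x ⊔ y. Proof. exact: bl_join_ubr. Qed.
Lemma ljlub x y z : x ⊑ z -> y ⊑ z -> x ⊔ y ⊑ z. Proof. exact: bl_join_lub. Qed.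
Lemma ljC x y : x ⊔ y = y ⊔ x.
Proof. by apply: lanti; apply: ljlub; [exact: ljr|exact: ljl|exact: ljr|exact: ljl]. Qed.
Lemma ljD x y z : (x ⊔ y) + z = (x + z) ⊔ (y + z).
Proof.
apply: lanti; last by apply: ljlub; apply: laddr; [exact: ljl|exact: ljr].
set W := (x + z) ⊔ (y + z).
have h : x ⊔ y ⊑ W - z.
  apply: ljlub; apply: (@laddrE _ _ z); rewrite subrK; [exact: ljl|exact: ljr].
by have := laddr z h; rewrite subrK.
Qed.
Lemma ljmono a b c d : a ⊑ b -> c ⊑ d -> a ⊔ c ⊑ b ⊔ d.
Proof.
move=> h1 h2; apply: ljlub; [exact: ltr h1 (ljl _ _)|exact: ltr h2 (ljr _ _)].
Qed.
Lemma ljid x : x ⊔ x = x.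
Proof. by apply: lanti; [apply: ljlub; exact: lrefl|exact: ljl]. Qed.
Lemma ljle x y : x ⊑ y -> x ⊔ y = y.
Proof. by move=> h; apply: lanti; [apply: ljlub => //; exact: lrefl|exact: ljr]. Qed.
Lemma ljZ (a : R) x y : 0 < a -> a *: (x ⊔ y) = (a *: x) ⊔ (a *: y).
Proof.
move=> a0; apply: lanti; last first.
  by apply: ljlub; apply: lscale; rewrite ?ltW //; [exact: ljl|exact: ljr].
have an : a != 0 by rewrite gt_eqF.
have ai : 0 <= a^-1 by rewrite invr_ge0 ltW.
set W := (a *: x) ⊔ (a *: y).
have e : W = a *: (a^-1 *: W) by rewrite scalerA divff ?scale1r.
rewrite e; apply: lscale; first by rewrite ltW.
have ex : x = a^-1 *: (a *: x) by rewrite scalerA mulVf ?scale1r.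
have ey : y = a^-1 *: (a *: y) by rewrite scalerA mulVf ?scale1r.
apply: ljlub.
- rewrite {1}ex; apply: lscale => //; exact: ljl.
- rewrite {1}ey; apply: lscale => //; exact: ljr.
Qed.

Lemma lml x y : bl_meet L x y ⊑ x.
Proof. by apply: loppE; rewrite /bl_meet opprK; exact: ljl. Qed.
Lemma lmr x y : bl_meet L x y ⊑ y.
Proof. by apply: loppE; rewrite /bl_meet opprK; exact: ljr. Qed.
Lemma lmglb x y z : z ⊑ x -> z ⊑ y -> z ⊑ bl_meet L x y.
Proof.
move=> h1 h2; apply: loppE; rewrite /bl_meet opprK.
by apply: ljlub; apply: lopp.
Qed.

Definition pp x := x ⊔ 0.
Definition np x := (- x) ⊔ 0.
Lemma pp_ge0 x : 0 ⊑ pp x. Proof. exact: ljr. Qed.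
Lemma np_ge0 x : 0 ⊑ np x. Proof. exact: ljr. Qed.
Lemma pp_ge x : x ⊑ pp x. Proof. exact: ljl. Qed.
Lemma ppnp x : pp x - np x = x.
Proof.
suff : pp x - x = np x by move=> <-; rewrite opprB addrC subrK.
by rewrite /pp ljD subrr add0r ljC.
Qed.
Lemma pp_pos x : 0 ⊑ x -> pp x = x.
Proof. by move=> h; rewrite /pp ljC ljle. Qed.
Lemma pp_subadd x y : pp (x + y) ⊑ pp x + pp y.
Proof.
apply: ljlub; first by apply: ladd; exact: pp_ge.
by rewrite -[0]addr0; apply: ladd; exact: pp_ge0.
Qed.
Lemma pp_scale (a : R) x : 0 <= a -> pp (a *: x) = a *: pp x.
Proof.
rewrite le_eqVlt => /orP [/eqP <-|a0]; first by rewrite !scale0r /pp ljid.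
by rewrite /pp ljZ // scaler0.
Qed.
Lemma np_pp x : np x = pp (- x). Proof. by []. Qed.
Lemma pp0_pos x : pp (- x) = 0 -> 0 ⊑ x.
Proof. move=> h; apply: loppE; rewrite oppr0 -h; exact: pp_ge. Qed.

Lemma abs_ge x : x ⊑ bl_abs L x. Proof. exact: ljl. Qed.
Lemma abs_geN x : - x ⊑ bl_abs L x. Proof. exact: ljr. Qed.
Lemma abs_ge0 x : 0 ⊑ bl_abs L x.
Proof.
have h := ladd (abs_ge x) (abs_geN x); rewrite subrr in h.
have i2 : 0 <= (2:R)^-1 by rewrite invr_ge0.
have := lscale i2 h.
rewrite scaler0.
suff -> : (2:R)^-1 *: (bl_abs L x + bl_abs L x) = bl_abs L x by [].
by rewrite -mulr2n -[bl_abs L x *+ 2]scaler_nat scalerA mulVf ?scale1r // pnatr_eq0.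
Qed.
Lemma abs_pos x : 0 ⊑ x -> bl_abs L x = x.
Proof.
move=> h; rewrite /bl_abs ljC; apply: ljle; apply: ltr (lopp h) _; rewrite oppr0 //.
Qed.
Lemma abs_lub x y : x ⊑ y -> - x ⊑ y -> bl_abs L x ⊑ y.
Proof. exact: ljlub. Qed.
Lemma abs_abs x : bl_abs L (bl_abs L x) = bl_abs L x.
Proof. exact: abs_pos (abs_ge0 x). Qed.
Lemma norm_abs x : `|bl_abs L x| = `|x|.
Proof.
have e : bl_abs L x ⊔ - bl_abs L x = bl_abs L x := abs_abs x.
apply/eqP; rewrite eq_le; apply/andP; split.
- apply: (@bl_norm_mono _ _ L (bl_abs L x) x); rewrite e; exact: lrefl.
- apply: (@bl_norm_mono _ _ L x (bl_abs L x)); rewrite e; exact: lrefl.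
Qed.
Lemma norm_mono0 x y : 0 ⊑ x -> x ⊑ y -> `|x| <= `|y|.
Proof.
move=> x0 xy; apply: (@bl_norm_mono _ _ L x y).
have y0 : 0 ⊑ y by apply: ltr xy.
by change (bl_abs L x ⊑ bl_abs L y); rewrite !abs_pos.
Qed.
Lemma pp_le_abs x : pp x ⊑ bl_abs L x.
Proof. apply: ljlub; [exact: abs_ge|exact: abs_ge0]. Qed.
Lemma norm_pp x : `|pp x| <= `|x|.
Proof. rewrite -(norm_abs x); apply: norm_mono0; [exact: pp_ge0|exact: pp_le_abs]. Qed.
Lemma norm_np x : `|np x| <= `|x|.
Proof. by rewrite np_pp -(normrN x); exact: norm_pp. Qed.

Lemma riesz y x1 x2 : 0 ⊑ x1 -> 0 ⊑ x2 -> 0 ⊑ y -> y ⊑ x1 + x2 ->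
  exists y1 y2, [/\ y = y1 + y2, 0 ⊑ y1, y1 ⊑ x1, 0 ⊑ y2 & y2 ⊑ x2].
Proof.
move=> h1 h2 hy hyx; exists (bl_meet L y x1), (y - bl_meet L y x1); split.
- by rewrite addrC subrK.
- by apply: lmglb.
- exact: lmr.
- by apply: lsub0; exact: lml.
- rewrite /bl_meet opprK addrC ljD addNr ljC.
  apply: ljlub => //; apply: lsub0E; rewrite opprD opprK addrA.
  by apply: lsub0; move: hyx; rewrite addrC.
Qed.

End Lat.
Section HahnBanach.
Context {R : realType} {V : lmodType R} (p : V -> R).
Hypothesis p_add : forall x y, p (x + y) <= p x + p y.
Hypothesis p_hom : forall (a : R) x, 0 <= a -> p (a *: x) = a * p x.

Lemma p0 : p 0 = 0.
Proof. by have := @p_hom 0 0 (lexx _); rewrite scale0r mul0r. Qed.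

Definition lin_on (D : set V) (g : V -> R) :=
  and (forall x y, D x -> D y -> g (x + y) = g x + g y)
  (forall (a : R) x, D x -> g (a *: x) = a * g x).

Definition good (D : set V) (g : V -> R) :=
  [/\ D 0, (forall x y, D x -> D y -> D (x + y)),
      (forall (a : R) x, D x -> D (a *: x)),
      lin_on D g &
      (forall x, D x -> g x <= p x)].

Lemma ext_uniq (D : set V) x y y' (t t' : R) :
  (forall x y, D x -> D y -> D (x + y)) -> (forall (a : R) x, D x -> D (a *: x)) ->
  ~ D x -> D y -> D y' -> y + t *: x = y' + t' *: x -> y = y' /\ t = t'.
Proof.
move=> Dadd Dsc nDx Dy Dy' e.
have tt : t = t'.
  apply/eqP; apply/negP => /negP tn; apply: nDx.
  have -> : x = (t - t')^-1 *: (y' - y).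
    have e2 : (t - t') *: x = y' - y.
      by rewrite scalerBl -[t *: x](addKr y) e addrA addrK addrC.
    by rewrite -e2 scalerA mulVf ?scale1r // subr_eq0.
  by apply: (Dsc); apply: (Dadd) => //; rewrite -scaleN1r; apply: (Dsc).
by subst t'; split => //; move/addIr: e.
Qed.

Lemma one_step (D : set V) (g : V -> R) x (a : R) : good D g -> ~ D x ->
  (forall y (t : R), D y -> g y + t * a <= p (y + t *: x)) ->
  exists g' : V -> R, [/\ good [set y + t *: x | y in D & t in setT] g',
     (forall y, D y -> g' y = g y) & g' x = a].
Proof.
move=> gD nDx hyp.
case: gD => D0 Dadd Dsc [gadd gsc] gp.
pose dec w := xget (0 : V, 0 : R) [set yt : V * R | D yt.1 /\ w = yt.1 + yt.2 *: x].
pose g' w := g (dec w).1 + (dec w).2 * a.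
have decP y t : D y -> dec (y + t *: x) = (y, t).
  move=> Dy; have : [set yt : V * R | D yt.1 /\ y + t *: x = yt.1 + yt.2 *: x] (dec (y + t *: x)).
    by apply: xgetPex; exists (y, t).
  case: (dec _) => y' t' /= [Dy' e].
  by have [-> ->] := ext_uniq Dadd Dsc nDx Dy Dy' e.
have g'E y t : D y -> g' (y + t *: x) = g y + t * a.
  by move=> Dy; rewrite /g' decP.
have gsc0 : g 0 = 0 by have := @gsc 0 0 D0; rewrite scale0r mul0r.
exists g'; split.
- split.
  + by exists 0 => //; exists 0 => //; rewrite scale0r addr0.
  + move=> _ _ [y1 Dy1 [t1 _ <-]] [y2 Dy2 [t2 _ <-]].
    exists (y1 + y2); first exact: Dadd.
    by exists (t1 + t2) => //; rewrite scalerDl addrACA.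
  + move=> b _ [y1 Dy1 [t1 _ <-]]; exists (b *: y1); first exact: Dsc.
    by exists (b * t1) => //; rewrite scalerDr scalerA.
  + split.
    move=> _ _ [y1 Dy1 [t1 _ <-]] [y2 Dy2 [t2 _ <-]].
    rewrite addrACA -scalerDl !g'E ?gadd //; last exact: Dadd.
    by rewrite mulrDl addrACA.
    move=> b _ [y1 Dy1 [t1 _ <-]].
    rewrite scalerDr scalerA !g'E ?gsc //; last exact: Dsc.
    by rewrite mulrDr mulrA.
  + by move=> _ [y1 Dy1 [t1 _ <-]]; rewrite g'E //; exact: hyp.
- by move=> y Dy; have := g'E y 0 Dy; rewrite scale0r !addr0 mul0r addr0.
- by have := g'E 0 1 D0; rewrite scale1r add0r mul1r gsc0 add0r.
Qed.

Lemma choose_a (D : set V) (g : V -> R) x : good D g ->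
  exists a : R, forall y (t : R), D y -> g y + t * a <= p (y + t *: x).
Proof.
move=> gD; case: (gD) => D0 Dadd Dsc [gadd gsc] gp.
have gsc0 : g 0 = 0 by have := @gsc 0 0 D0; rewrite scale0r mul0r.
pose E := [set g y - p (y - x) | y in D].
have key y z : D y -> D z -> g y - p (y - x) <= p (z + x) - g z.
  move=> Dy Dz.
  have h : g y + g z <= p (y - x) + p (z + x).
    rewrite -gadd //; apply: le_trans (gp _ (Dadd _ _ Dy Dz)) _.
    by apply: le_trans (p_add _ _); rewrite addrCA subrK addrC.
  lra.
have En : E !=set0 by exists (g 0 - p (0 - x)); exists 0.
have Eub : has_ubound E.
  by exists (p (0 + x) - g 0) => _ [y Dy <-]; exact: key.
exists (sup E) => y t Dy.
have [t0|t0|->] := ltrgtP t 0; last first.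
- by rewrite mul0r addr0 scale0r addr0; exact: gp.
-
  have supl : sup E <= p (t^-1 *: y + x) - g (t^-1 *: y).
    by apply: ge_sup => // _ [z Dz <-]; apply: key => //; exact: Dsc.
  have tn : t != 0 by rewrite gt_eqF.
  have h := ler_wpM2l (ltW t0) supl.
  have hp : t * p (t^-1 *: y + x) = p (y + t *: x).
    by rewrite -(p_hom _ (ltW t0)) scalerDr scalerA divff // scale1r.
  have hg : t * g (t^-1 *: y) = g y.
    by rewrite -gsc ?scalerA ?divff ?scale1r //; exact: Dsc.
  rewrite mulrBr hp hg in h; lra.
-
  set s := - t; have s0 : 0 < s by rewrite oppr_gt0.
  have sn : s != 0 by rewrite gt_eqF.
  have supg : g (s^-1 *: y) - p (s^-1 *: y - x) <= sup E.
    by apply: ub_le_sup => //; exists (s^-1 *: y) => //; exact: Dsc.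
  have h := ler_wpM2l (ltW s0) supg.
  have hp : s * p (s^-1 *: y - x) = p (y + t *: x).
    rewrite -(p_hom _ (ltW s0)) scalerBr scalerA divff // scale1r.
    by rewrite /s scaleNr opprK.
  have hg : s * g (s^-1 *: y) = g y.
    by rewrite gsc ?mulrA ?divff ?mul1r //.
  have ht : t * sup E = - (s * sup E) by rewrite /s mulNr opprK.
  rewrite mulrBr hp hg in h; lra.
Qed.


Variables (v0 : V) (c : R).
Hypothesis hc : forall t : R, t * c <= p (t *: v0).

Definition PE := {pg : set V * (V -> R) | good pg.1 pg.2 /\ pg.1 v0 /\ pg.2 v0 = c}.
Definition PD (s : PE) := (sval s).1.
Definition PG (s : PE) := (sval s).2.
Definition Prel (s t : PE) := PD s `<=` PD t /\ forall x, PD s x -> PG t x = PG s x.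
Definition Prelb : rel PE := fun s t => `[< Prel s t >].

Lemma PE_good (s : PE) : good (PD s) (PG s).
Proof. by case: s => [[D g] [? ?]]. Qed.

Lemma PE_v0 (s : PE) : PD s v0 /\ PG s v0 = c.
Proof. by case: s => [[D g] [? ?]]. Qed.

Lemma base_exists : exists D g, good D g /\ D v0 /\ g v0 = c.
Proof.
have g0 : good [set 0] (fun _ => 0).
  split => //.
  - by move=> x y -> ->; rewrite addr0.
  - by move=> a x ->; rewrite scaler0.
  - by split => *; rewrite ?addr0 ?mulr0.
  - by move=> x ->; rewrite p0.
have [e|v0n] := eqVneq v0 0.
  exists [set 0], (fun _ => 0); split => //; split => //.
  have h1 := hc 1; have h2 := hc (-1).
  rewrite e !scaler0 p0 in h1 h2; lra.
have nD : ~ [set (0:V)] v0 by move=> /= e; rewrite e eqxx in v0n.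
have [g' [g'good g'D g'x]] := one_step (a := c) g0 nD
  (fun y t (e : [set 0] y) => ltac:(by rewrite e /= !add0r; exact: hc)).
exists [set y + t *: v0 | y in [set 0] & t in setT], g'; split => //; split => //.
by exists 0 => //; exists 1 => //; rewrite scale1r add0r.
Qed.

Theorem hahn_banach : exists f : V -> R,
  [/\ forall x y, f (x + y) = f x + f y,
      forall (a : R) x, f (a *: x) = a * f x,
      forall x, f x <= p x & f v0 = c].
Proof.
have [D0 [g0 [g0good [g0v g0c]]]] := base_exists.
pose t0 : PE := exist _ (D0, g0) (conj g0good (conj g0v g0c)).
have [m mmax] : exists t, premaximal Prelb t.
apply: (@ZL_preorder PE t0 Prelb).
- by move=> t; apply/asboolP; split => // x.
- move=> r s t /asboolP [rs1 rs2] /asboolP [st1 st2]; apply/asboolP; split.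
    by move=> x /rs1 /st1.
  by move=> x rx; rewrite st2 ?rs2 //; exact: rs1.
- move=> A Atot.
  have [[a Aa]|nA] := pselect (exists a, A a); last first.
    by exists t0 => s As; exfalso; apply: nA; exists s.
  pose DU x := exists s, A s /\ PD s x.
  pose gU x := match pselect (DU x) with
    | left h => PG (projT1 (cid h)) x | right _ => 0 end.
  have gUE s x : A s -> PD s x -> gU x = PG s x.
    move=> As Dx; rewrite /gU; case: pselect => [h|]; last first.
      by move=> nh; exfalso; apply: nh; exists s.
    case: (cid h) => s' /= [As' Ds'x].
    have [/asboolP [h1 h2]|/asboolP [h1 h2]] := Atot s s' As As'.
    + exact: h2.
    + by rewrite h2.
  have common s1 s2 : A s1 -> A s2 -> exists s, [/\ A s, PD s1 `<=` PD s & PD s2 `<=` PD s].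
    move=> A1 A2; have [/asboolP [h1 _]|/asboolP [h1 _]] := Atot s1 s2 A1 A2.
    + by exists s2; split.
    + by exists s1; split.
  have UG : good DU gU.
    have [aD0 aDadd aDsc [_ _] _] := PE_good a.
    split.
    - by exists a; split.
    - move=> x y [s1 [A1 D1]] [s2 [A2 D2]].
      have [s [As h1 h2]] := common _ _ A1 A2.
      have [_ Dadd _ _ _] := PE_good s.
      by exists s; split => //; apply: Dadd; [exact: h1|exact: h2].
    - move=> b x [s1 [A1 D1]].
      have [_ _ Dsc _ _] := PE_good s1.
      by exists s1; split => //; exact: Dsc.
    - split.
      + move=> x y [s1 [A1 D1]] [s2 [A2 D2]].
        have [s [As h1 h2]] := common _ _ A1 A2.
        have [_ Dadd _ [gadd _] _] := PE_good s.
        have Dx := h1 _ D1; have Dy := h2 _ D2.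
        by rewrite !(gUE s) //; [exact: gadd|exact: Dadd].
      + move=> b x [s1 [A1 D1]].
        have [_ _ Dsc [_ gsc] _] := PE_good s1.
        by rewrite !(gUE s1) //; [exact: gsc|exact: Dsc].
    - move=> x [s1 [A1 D1]].
      have [_ _ _ _ gp] := PE_good s1.
      by rewrite (gUE s1) //; exact: gp.
  have Uv0 : DU v0 /\ gU v0 = c.
    have [av ac] := PE_v0 a.
    by split; [exists a|rewrite (gUE a)].
  exists (exist _ (DU, gU) (conj UG Uv0)) => s As; apply/asboolP; split.
    by move=> x Dx; exists s.
  by move=> x Dx; rewrite /PG /= (gUE s).
  have DT : forall x, PD m x.
    move=> x; apply/not_notP => nDx.
    have [a ha] := choose_a x (PE_good m).
    have [g' [g'good g'D g'x]] := one_step (PE_good m) nDx ha.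
    have [mv mc] := PE_v0 m.
    have Dv : [set y + t *: x | y in PD m & t in setT] v0.
      by exists v0 => //; exists 0 => //; rewrite scale0r addr0.
    have gv : g' v0 = c by rewrite g'D.
    pose s' : PE := exist _ (_, g') (conj g'good (conj Dv gv)).
    have ms' : Prelb m s'.
      apply/asboolP; split.
        by move=> y Dy; exists y => //; exists 0 => //; rewrite scale0r addr0.
      by move=> y Dy; rewrite /PG /= g'D.
    have /asboolP [h1 _] := mmax s' ms'.
    apply: nDx; apply: h1; exists 0; first by have [] := PE_good m.
    by exists 1 => //; rewrite scale1r add0r.
  have [D0' Dadd Dsc [gadd gsc] gp] := PE_good m.
  have [mv mc] := PE_v0 m.
  exists (PG m); split => //.
  - by move=> x y; apply: gadd.
  - by move=> b x; apply: gsc.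
  - by move=> x; apply: gp.
Qed.

End HahnBanach.
Lemma lip_cont {R : realType} {V : normedModType R} (f : V -> R) (k : R) :
  0 < k -> (forall x y, `|f x - f y| <= k * `|x - y|) -> continuous f.
Proof.
move=> k0 fk x.
apply/(@cvgrPdist_lt _ _ _ (nbhs x)) => e e_gt0; near=> z.
rewrite (le_lt_trans (fk _ _))// -?ltr_pdivlMl//.
by near: z; apply: cvgr_dist_lt => //; rewrite mulrC divr_gt0.
Unshelve. all: by end_near. Qed.

Section Sep.
Context {R : realType} {V : completeNormedModType R} (L : banach_lattice V).
Local Notation "x ⊑ y" := (bl_le L x y) (at level 70).

Lemma pos_sep w : (forall f, is_dual_elt f -> (forall x, 0 ⊑ x -> 0 <= f x) -> 0 <= f w) ->
  0 ⊑ w.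
Proof.
move=> H; apply/not_notP => nw.
pose p x := `|pp L x|.
have p_add x y : p (x + y) <= p x + p y.
  apply: le_trans (ler_normD _ _); apply: norm_mono0; [exact: pp_ge0|exact: pp_subadd].
have p_hom (a : R) x : 0 <= a -> p (a *: x) = a * p x.
  by move=> a0; rewrite /p pp_scale // normrZ ger0_norm.
pose c := p (- w).
have c0 : 0 < c.
  rewrite /c /p normr_gt0; apply/negP => /eqP h; apply: nw; exact: pp0_pos.
have hc t : t * c <= p (t *: - w).
  have [t0|t0] := leP 0 t; first by rewrite p_hom.
  by apply: le_trans (normr_ge0 _); rewrite nmulr_rle0 // ltW.
have [f [fadd fsc fp fv]] := hahn_banach p_add p_hom hc.
have fN x : f (- x) = - f x by rewrite -scaleN1r fsc mulN1r.
have fB x y : f x - f y = f (x - y) by rewrite fadd fN.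
have fle x : `|f x| <= `|x|.
  rewrite ler_norml; apply/andP; split.
    rewrite lerNl -fN; apply: le_trans (fp _) _; rewrite -(normrN x); exact: norm_pp.
  by apply: le_trans (fp _) _; exact: norm_pp.
have fpos x : 0 ⊑ x -> 0 <= f x.
  move=> x0; have : f (- x) <= 0.
    apply: le_trans (fp _) _; rewrite /p /pp ljle ?normr0 //.
    by have := lopp x0; rewrite oppr0.
  by rewrite fN oppr_le0.
have fd : is_dual_elt f.
  split => //; apply: (@lip_cont _ _ f 1) => // x y.
  by rewrite mul1r fB; exact: fle.
have := H f fd fpos; rewrite -[w]opprK fN fv oppr_ge0 => /(lt_le_trans c0).
by rewrite ltxx.
Qed.

End Sep.
Section Weak.
Context {R : realType} {V : completeNormedModType R}.
HB.instance Definition _ := gen_eqMixin (@dual_space R V).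

Local Notation Y := {ptws (@dual_space R V) -> R}.

Lemma weak_cont (f : V -> R) : is_dual_elt f -> continuous (f : @weakV R V -> R).
Proof.
move=> fd x.
have -> : f = (fun x => proj (exist _ f fd : dual_space) (weak_eval x)) by [].
apply: continuous_comp; first exact: initial_continuous.
exact: proj_continuous.
Qed.

Lemma cluster_closed {T : topologicalType} (G : set_system T) (C : set T) q :
  cluster G q -> G C -> closed C -> C q.
Proof.
move=> cq GC cC; apply: cC => N Nq.
by have [z [Cz Nz]] := cq C N GC Nq; exists z.
Qed.

Definition Kr (r : R) := [set x : V | forall f M, is_dual_elt f -> 0 <= M ->
  (forall y, `|f y| <= M * `|y|) -> `|f x| <= r * M].

Lemma Kr_closed r : closed (Kr r : set (@weakV R V)).
Proof.
pose D := [set fM : (V -> R) * R | is_dual_elt fM.1 /\ 0 <= fM.2 /\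
  (forall y, `|fM.1 y| <= fM.2 * `|y|)].
have -> : (Kr r : set (@weakV R V)) =
   \bigcap_(fM in D) [set x : @weakV R V | `|fM.1 x| <= r * fM.2].
  apply/seteqP; split.
    by move=> x Kx [f M] [fd [M0 fM]]; exact: Kx.
  by move=> x Kx f M fd M0 fM; exact: (Kx (f, M)).
apply: closed_bigI => -[f M] [/= fd _].
have -> : [set x : @weakV R V | `|f x| <= r * M] =
  (fun x => `|f x|) @^-1` [set t : R | t <= r * M] by [].
move: (@closed_le R (r * M)); apply: (proj1 (continuous_closedP _)).
move=> x; apply: continuous_comp; first exact: weak_cont.
exact: norm_continuous.
Qed.

Lemma dual_bounded (f : V -> R) : is_dual_elt f ->
  exists M, 0 <= M /\ forall y, `|f y| <= M * `|y|.
Proof.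
move=> [fadd fsc fc].
have lin : GRing.linear_for (@GRing.scale R R^o) (f : V -> R^o).
  by move=> a x y; rewrite fadd fsc.
pose F : {linear V -> R^o} := HB.pack (f : V -> R^o) (GRing.isLinear.Build R V R^o *:%R (f : V -> R^o) lin).
have : continuous (F : V -> R^o) by exact: fc.
move=> /linear_bounded_continuous /linear_boundedP [M [_ HM]].
exists (`|M| + 1); split; first by rewrite addr_ge0.
move=> y; apply: (HM (`|M| + 1)); rewrite (le_lt_trans (ler_norm M)) //.
by rewrite ltrDl.
Qed.


Lemma dual_add (f g : V -> R) : is_dual_elt f -> is_dual_elt g ->
  is_dual_elt (fun x => f x + g x).
Proof.
move=> [fa fs fc] [ga gs gc]; split.
- by move=> x y; rewrite fa ga addrACA.
- by move=> a x; rewrite fs gs mulrDr.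
- by move=> x; apply: continuousD; [exact: fc|exact: gc].
Qed.

Lemma dual_scale (a : R) (f : V -> R) : is_dual_elt f ->
  is_dual_elt (fun x => a * f x).
Proof.
move=> [fa fs fc]; split.
- by move=> x y; rewrite fa mulrDr.
- by move=> b x; rewrite fs mulrCA.
- move=> x; apply: continuousM; last exact: fc.
  exact: cst_continuous.
Qed.

Lemma Kr_compact r : 0 <= r -> reflexive_space V -> compact (Kr r : set (@weakV R V)).
Proof.
move=> r0 refl F FF FK.
pose Bi (i : @dual_space R V) := [set t : R | forall M, 0 <= M ->
  (forall y, `|sval i y| <= M * `|y|) -> `|t| <= r * M].
have Bc i : compact (Bi i).
  have [M0 [M00 hM0]] := dual_bounded (svalP i).
  apply: (@subclosed_compact _ (Bi i) `[- (r * M0), r * M0]%classic); last first.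
  - move=> t Bt; have := Bt M0 M00 hM0; rewrite set_itvcc /= -ler_norml //.
  - exact: segment_compact.
  - pose D := [set M : R | 0 <= M /\ forall y, `|sval i y| <= M * `|y|].
    have -> : Bi i = \bigcap_(M in D) [set t : R | `|t| <= r * M].
      apply/seteqP; split.
        by move=> t Bt M [M0' hM]; exact: Bt.
      by move=> t Bt M M0' hM; exact: (Bt M).
    apply: closed_bigI => M _.
    have -> : [set t : R | `|t| <= r * M] = (fun t : R => `|t|) @^-1` [set t : R | t <= r * M] by [].
    move: (@closed_le R (r * M)); apply: (proj1 (continuous_closedP _)).
    exact: norm_continuous.
pose B := [set q : Y | forall i, Bi i (q i)].
have Bcomp : compact B by exact: (@tychonoff (@dual_space R V : eqType) (fun=> R) Bi Bc).
pose G := (weak_eval : @weakV R V -> Y) @ F.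
have GB : G B.
  have sub : (Kr r : set V) `<=` (weak_eval @^-1` B).
    move=> x Kx i M M0 hM; exact: (Kx (sval i) M (svalP i) M0 hM).
  exact: (filterS sub FK).
have GP : ProperFilter G by apply: fmap_proper_filter.
have [q [Bq cq]] := Bcomp G GP GB.
pose phi (h : V -> R) := match pselect (is_dual_elt h) with
  | left pf => q (exist _ h pf) | right _ => 0 end.
have phiE h (pf : is_dual_elt h) : phi h = q (exist _ h pf).
  rewrite /phi; case: pselect => [pf'|]; last by [].
  by have -> : pf' = pf by exact: Prop_irrelevance.
have Gall (C : set Y) : (forall x, C (weak_eval x)) -> G C.
  move=> HC; have sub : (setT : set V) `<=` (weak_eval @^-1` C) by move=> x _; exact: HC.
  exact: (filterS sub (@filterT _ F _)).
have hadd f g (pf : is_dual_elt f) (pg : is_dual_elt g) :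
    phi (fun x => f x + g x) = phi f + phi g.
  rewrite (phiE _ (dual_add pf pg)) (phiE _ pf) (phiE _ pg).
  set sfg : @dual_space R V := exist _ _ (dual_add pf pg).
  set sf : @dual_space R V := exist _ _ pf.
  set sg : @dual_space R V := exist _ _ pg.
  apply: (@cluster_closed _ G [set q' : Y | q' sfg = q' sf + q' sg]) => //.
    by apply: Gall => x.
  have -> : [set q' : Y | q' sfg = q' sf + q' sg] =
    (fun q' : Y => q' sfg - (q' sf + q' sg)) @^-1` [set t : R | t = 0].
    apply/seteqP; split => q' /= h; first by rewrite h subrr.
    by apply/eqP; rewrite -subr_eq0; apply/eqP.
  move: (@closed_eq R 0); apply: (proj1 (continuous_closedP _)).
  move=> q'.
  apply: (@continuousB R R^o Y (fun q' : Y => q' sfg) (fun q' : Y => q' sf + q' sg)).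
    exact: (@proj_continuous _ (fun=> R) sfg).
  apply: (@continuousD R R^o Y (fun q' : Y => q' sf) (fun q' : Y => q' sg)).
    exact: (@proj_continuous _ (fun=> R) sf).
  exact: (@proj_continuous _ (fun=> R) sg).
have hsc (a : R) f (pf : is_dual_elt f) : phi (fun x => a * f x) = a * phi f.
  rewrite (phiE _ (dual_scale a pf)) (phiE _ pf).
  set saf : @dual_space R V := exist _ _ (dual_scale a pf).
  set sf : @dual_space R V := exist _ _ pf.
  apply: (@cluster_closed _ G [set q' : Y | q' saf = a * q' sf]) => //.
    by apply: Gall => x.
  have -> : [set q' : Y | q' saf = a * q' sf] =
    (fun q' : Y => q' saf - a * q' sf) @^-1` [set t : R | t = 0].
    apply/seteqP; split => q' /= h; first by rewrite h subrr.
    by apply/eqP; rewrite -subr_eq0; apply/eqP.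
  move: (@closed_eq R 0); apply: (proj1 (continuous_closedP _)).
  move=> q'.
  apply: (@continuousB R R^o Y (fun q' : Y => q' saf) (fun q' : Y => a * q' sf)).
    exact: (@proj_continuous _ (fun=> R) saf).
  apply: (@continuousM R Y (fun=> a) (fun q' : Y => q' sf)).
    exact: cst_continuous.
  exact: (@proj_continuous _ (fun=> R) sf).
have [x hx] : exists x : V, forall f, is_dual_elt f -> phi f = f x.
  apply: refl.
  - by move=> f g pf pg; exact: hadd.
  - by move=> a f pf; exact: hsc.
  - exists r => f M pf M0 hM; rewrite (phiE _ pf); exact: Bq.
have qE : q = weak_eval x.
  apply: funext => -[f pf]; rewrite /weak_eval /= -hx // (phiE _ pf) //.
exists x; split.
  by move=> f M pf M0 hM; rewrite -hx // (phiE _ pf); exact: Bq.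
move=> A N FA; rewrite nbhsE; case=> O' [oO' O'x] O'N.
case: oO' O'x O'N => O oO <- O'x O'N.
have GA : G (weak_eval @` A).
  have sub : A `<=` weak_eval @^-1` (weak_eval @` A) by move=> a Aa; exists a.
  exact: (filterS sub FA).
have Oq : nbhs q O by apply: open_nbhs_nbhs; split => //; rewrite qE.
have [_ [[a Aa <-] Oa]] := cq _ _ GA Oq.
by exists a; split => //; apply: O'N.
Qed.

End Weak.
Lemma dual_N {R : realType} {V : completeNormedModType R} (f : V -> R) :
  is_dual_elt f -> forall x, f (- x) = - f x.
Proof. by move=> [_ fs _] x; rewrite -scaleN1r fs mulN1r. Qed.

Lemma dual_B {R : realType} {V : completeNormedModType R} (f : V -> R) :
  is_dual_elt f -> forall x y, f (x - y) = f x - f y.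
Proof. by move=> fd x y; case: (fd) => fa _ _; rewrite fa dual_N. Qed.

Section Dedekind.
Context {R : realType} {V : completeNormedModType R} (L : banach_lattice V).
Local Notation "x ⊑ y" := (bl_le L x y) (at level 70).
Local Notation "x ⊔ y" := (bl_join L x y) (at level 50).

Lemma dedekind (refl : reflexive_space V) (A : set V) a0 u0 :
  A a0 -> (forall a, A a -> a ⊑ u0) ->
  exists z, (forall a, A a -> a ⊑ z) /\ (forall u, (forall a, A a -> a ⊑ u) -> z ⊑ u).
Proof.
move=> Aa0 Au0.
pose D := [set x | forall S : set V, A `<=` S ->
  (forall x y, S x -> S y -> S (x ⊔ y)) -> S x].
have AD : A `<=` D by move=> x Ax S AS _; exact: AS.
have Djoin x y : D x -> D y -> D (x ⊔ y).
  by move=> Dx Dy S AS Sj; apply: (Sj); [exact: (Dx S AS Sj)|exact: (Dy S AS Sj)].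
have Dub u : (forall a, A a -> a ⊑ u) -> forall d, D d -> d ⊑ u.
  move=> Au d Dd; apply: (Dd [set x | x ⊑ u]) => //.
  by move=> x y xu yu; exact: ljlub.
pose T d := [set d' | D d' /\ d ⊑ d'].
pose Fl := filter_from D T.
have Ff : Filter Fl.
  apply: filter_from_filter; first by exists a0; exact: AD.
  move=> i j Di Dj; exists (i ⊔ j); first exact: Djoin.
  move=> d' [Dd' h]; split; split => //.
  - exact: ltr (ljl L _ _) h.
  - exact: ltr (ljr L _ _) h.
have FP : ProperFilter Fl.
  apply: filter_from_proper => d Dd; exists d; split => //; exact: lrefl.
pose r := `|bl_abs L a0 + bl_abs L u0|.
have r0 : 0 <= r by rewrite /r normr_ge0.
have FK : Fl (Kr r).
  exists a0; first exact: AD.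
  move=> d [Dd ad] f M fd M0 fM.
  apply: le_trans (fM d) _; rewrite mulrC; apply: ler_wpM2r => //.
  rewrite -(norm_abs L d); apply: norm_mono0; first exact: abs_ge0.
  apply: abs_lub.
  - apply: ltr (Dub _ Au0 _ Dd) _; apply: ltr (abs_ge L u0) _.
    rewrite -[X in X ⊑ _]add0r; apply: laddr; exact: abs_ge0.
  - apply: ltr (lopp ad) _; apply: ltr (abs_geN L a0) _.
    rewrite -[X in X ⊑ _]addr0; apply: laddl; exact: abs_ge0.
have [z [_ cz]] := Kr_compact r0 refl FP FK.
have openf f (c : R) : is_dual_elt f -> open ([set w : @weakV R V | f w < c]) /\
                                          open ([set w : @weakV R V | c < f w]).
  move=> fd; have fc := weak_cont fd; split.
  - by move: (@open_lt R c); apply: (proj1 (continuousP _)).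
  - by move: (@open_gt R c); apply: (proj1 (continuousP _)).
have fmono f x y : is_dual_elt f -> (forall x, 0 ⊑ x -> 0 <= f x) -> x ⊑ y -> f x <= f y.
  move=> fd fp xy; have := fp _ (lsub0 xy); rewrite dual_B // subr_ge0 //.
exists z; split.
- move=> a Aa; apply: lsub0E; apply: pos_sep => f fd fp.
  rewrite dual_B // subr_ge0; rewrite leNgt; apply/negP => fz.
  have Nz : nbhs (z : @weakV R V) [set w : @weakV R V | f w < f a].
    by apply: open_nbhs_nbhs; split => //; exact: (proj1 (openf f _ fd)).
  have Ta : Fl (T a) by exists a => //; exact: AD.
  have [d' [[Dd' ad'] fd']] := cz _ _ Ta Nz.
  by have := fmono _ _ _ fd fp ad'; rewrite leNgt fd'.
- move=> u Au; apply: lsub0E; apply: pos_sep => f fd fp.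
  rewrite dual_B // subr_ge0; rewrite leNgt; apply/negP => fz.
  have Nz : nbhs (z : @weakV R V) [set w : @weakV R V | f u < f w].
    by apply: open_nbhs_nbhs; split => //; exact: (proj2 (openf f _ fd)).
  have Ta : Fl (T a0) by exists a0 => //; exact: AD.
  have [d' [[Dd' ad'] fd']] := cz _ _ Ta Nz.
  by have := fmono _ _ _ fd fp (Dub _ Au _ Dd'); rewrite leNgt fd'.
Qed.

End Dedekind.
Section RK.
Context {R : realType} {E F : completeNormedModType R}.
Variables (LE : banach_lattice E) (LF : banach_lattice F).
Hypothesis reflF : reflexive_space F.
Variable T : {linear E -> F}.
Hypothesis Tob : order_bounded LE LF T.

Local Notation "x ⊑ y" := (bl_le LE x y) (at level 70).
Local Notation "x ≼ y" := (bl_le LF x y) (at level 70).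

Definition Aset x := [set T y | y in [set y | 0 ⊑ y /\ y ⊑ x]].
Definition is_sup (A : set F) z :=
  (forall a, A a -> a ≼ z) /\ (forall u, (forall a, A a -> a ≼ u) -> z ≼ u).

Lemma sup_ex x : 0 ⊑ x -> exists z, is_sup (Aset x) z.
Proof.
move=> x0; have [c [d hd]] := Tob 0 x.
have A0 : Aset x 0 by exists 0; [split => //; exact: lrefl|exact: raddf0].
have ub : forall a, Aset x a -> a ≼ d.
  by move=> _ [y [y0 yx] <-]; exact: (proj2 (hd y y0 yx)).
have [z [z1 z2]] := dedekind reflF A0 ub.
by exists z; split.
Qed.

Definition P x : F := match pselect (exists z, is_sup (Aset x) z) with
  | left h => projT1 (cid h) | right _ => 0 end.

Lemma P_sup x : 0 ⊑ x -> is_sup (Aset x) (P x).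
Proof.
move=> x0; rewrite /P; case: pselect => [h|]; last by move=> nh; exfalso; apply: nh; exact: sup_ex.
by case: (cid h).
Qed.

Lemma P_ge x y : 0 ⊑ y -> y ⊑ x -> T y ≼ P x.
Proof.
move=> y0 yx; have x0 : 0 ⊑ x by apply: ltr yx.
by apply: (proj1 (P_sup x0)); exists y.
Qed.

Lemma P_le x u : 0 ⊑ x -> (forall y, 0 ⊑ y -> y ⊑ x -> T y ≼ u) -> P x ≼ u.
Proof.
move=> x0 h; apply: (proj2 (P_sup x0)) => _ [y [y0 yx] <-]; exact: h.
Qed.

Lemma P_ge0 x : 0 ⊑ x -> 0 ≼ P x.
Proof. by move=> x0; have := P_ge (lrefl LE 0) x0; rewrite raddf0. Qed.

Lemma P0 : P 0 = 0.
Proof.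
apply: lanti; last exact: P_ge0 (lrefl _ _).
apply: P_le; first exact: lrefl.
by move=> y y0 y00; rewrite (lanti y00 y0) raddf0; exact: lrefl.
Qed.

Lemma P_add x1 x2 : 0 ⊑ x1 -> 0 ⊑ x2 -> P (x1 + x2) = P x1 + P x2.
Proof.
move=> h1 h2; have h12 : 0 ⊑ x1 + x2 by rewrite -[0]addr0; exact: ladd.
apply: lanti.
  apply: P_le => // y y0 yx.
  have [y1 [y2 [-> y10 y1x y20 y2x]]] := riesz h1 h2 y0 yx.
  by rewrite linearD; apply: ladd; exact: P_ge.
have step1 y2 : 0 ⊑ y2 -> y2 ⊑ x2 -> P x1 ≼ P (x1 + x2) - T y2.
  move=> y20 y2x; apply: P_le => // y1 y10 y1x.
  apply: (@laddrE _ _ LF _ _ (T y2)). rewrite subrK -linearD.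
  apply: P_ge; first by rewrite -[0]addr0; exact: ladd.
  exact: ladd.
have step2 : P x2 ≼ P (x1 + x2) - P x1.
  apply: P_le => // y2 y20 y2x.
  have := step1 _ y20 y2x => /(laddr (T y2 - P x1)).
  have e1 : P x1 + (T y2 - P x1) = T y2 by rewrite addrCA subrr addr0.
  have e2 : P (x1 + x2) - T y2 + (T y2 - P x1) = P (x1 + x2) - P x1.
    by rewrite addrA subrK.
  by rewrite e1 e2.
have := laddr (P x1) step2; rewrite subrK addrC //.
Qed.

Lemma P_scale (a : R) x : 0 <= a -> 0 ⊑ x -> P (a *: x) = a *: P x.
Proof.
move=> a0 x0.
have key (b : R) z : 0 < b -> 0 ⊑ z -> P (b *: z) ≼ b *: P z.
  move=> b0 z0; have bz0 : 0 ⊑ b *: z by apply: lscale0 => //; exact: ltW.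
  apply: P_le => // y y0 yx.
  have bn : b != 0 by rewrite gt_eqF.
  have -> : y = b *: (b^-1 *: y) by rewrite scalerA divff ?scale1r.
  rewrite linearZ; apply: lscale; first exact: ltW.
  have bi : 0 <= b^-1 by rewrite invr_ge0 ltW.
  apply: P_ge; first exact: lscale0.
  by have := lscale bi yx; rewrite scalerA mulVf ?scale1r.
move: a0; rewrite le_eqVlt => /orP [/eqP <-|a0].
  by rewrite !scale0r P0.
apply: lanti; first exact: key.
have an : a != 0 by rewrite gt_eqF.
have ai : 0 < a^-1 by rewrite invr_gt0.
have ax0 : 0 ⊑ a *: x by apply: lscale0 => //; exact: ltW.
have := key _ _ ai ax0; rewrite scalerA mulVf ?scale1r // => h.
have := lscale (ltW a0) h; rewrite scalerA divff ?scale1r //.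
Qed.

Lemma P_mono x y : 0 ⊑ x -> x ⊑ y -> P x ≼ P y.
Proof.
move=> x0 xy; have yx0 := lsub0 xy.
have -> : y = x + (y - x) by rewrite addrC subrK.
rewrite P_add //; rewrite -[X in X ≼ _]addr0; apply: laddl; exact: P_ge0.
Qed.

Definition Q x := P (pp LE x) - P (np LE x).

Lemma Q_dec a b : 0 ⊑ a -> 0 ⊑ b -> Q (a - b) = P a - P b.
Proof.
move=> a0 b0; rewrite /Q.
set x := a - b.
have e : pp LE x + b = a + np LE x.
  have h := ppnp LE x; rewrite {2}/x in h.
  by rewrite -[pp LE x](subrK (np LE x)) h addrAC subrK.
have := congr1 P e; rewrite !P_add //; try exact: pp_ge0; try exact: np_ge0.
move=> h; by rewrite -[P (pp LE x)](addrK (P b)) h addrAC addrK.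
Qed.

Lemma Q_pos x : 0 ⊑ x -> Q x = P x.
Proof. by move=> x0; rewrite -[x]subr0 Q_dec ?P0 ?subr0 //; exact: lrefl. Qed.

Lemma Q_add x y : Q (x + y) = Q x + Q y.
Proof.
have e : x + y = (pp LE x + pp LE y) - (np LE x + np LE y).
  by rewrite opprD addrACA !ppnp.
rewrite e Q_dec; last 2 first.
- by rewrite -[0]addr0; apply: ladd; exact: pp_ge0.
- by rewrite -[0]addr0; apply: ladd; exact: np_ge0.
rewrite !P_add; try exact: pp_ge0; try exact: np_ge0.
by rewrite /Q opprD addrACA.
Qed.

Lemma Q_scale (a : R) x : Q (a *: x) = a *: Q x.
Proof.
have [a0|a0] := leP 0 a.
  have e : a *: x = a *: pp LE x - a *: np LE x by rewrite -scalerBr ppnp.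
  have hp : 0 ⊑ a *: pp LE x := lscale0 a0 (pp_ge0 LE x).
  have hn : 0 ⊑ a *: np LE x := lscale0 a0 (np_ge0 LE x).
  by rewrite e (Q_dec hp hn) (P_scale a0 (pp_ge0 LE x)) (P_scale a0 (np_ge0 LE x)) -scalerBr.
have b0 : 0 <= - a by rewrite oppr_ge0 ltW.
have e : a *: x = (- a) *: np LE x - (- a) *: pp LE x.
  by rewrite -scalerBr -opprB ppnp scaleNr scalerN opprK.
have hp : 0 ⊑ (- a) *: pp LE x := lscale0 b0 (pp_ge0 LE x).
have hn : 0 ⊑ (- a) *: np LE x := lscale0 b0 (np_ge0 LE x).
rewrite e (Q_dec hn hp) (P_scale b0 (pp_ge0 LE x)) (P_scale b0 (np_ge0 LE x)).
by rewrite /Q -scalerBr scaleNr -scalerN opprB.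
Qed.

Definition Sf x := Q x + Q x - T x.

Lemma Sf_lin : GRing.linear_for (@GRing.scale R F) Sf.
Proof.
move=> a u v; rewrite /Sf !Q_add !Q_scale linearP.
move: (Q u) (Q v) (T u) (T v) => qu qv tu tv.
rewrite scalerBr scalerDr opprD.
rewrite [a *: qu + qv + _]addrACA.
by rewrite (addrACA (a *: qu + a *: qu)).
Qed.

End RK.
Section PosBound.
Context {R : realType} {E F : completeNormedModType R}.
Variables (LE : banach_lattice E) (LF : banach_lattice F).
Local Notation "x ⊑ y" := (bl_le LE x y) (at level 70).
Local Notation "x ≼ y" := (bl_le LF x y) (at level 70).

Lemma cone_closed : closed [set x : E | 0 ⊑ x].
Proof.
move=> x clx; apply: (@pp0_pos _ _ LE).
have [//|nz] := eqVneq (pp LE (- x)) 0; exfalso.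
have e0 : 0 < `|pp LE (- x)| by rewrite normr_gt0.
have [c [c0 xc]] := clx _ (nbhsx_ballx x _ e0).
move: xc; rewrite -ball_normE /= => xc.
have h1 : pp LE (- x) ⊑ pp LE (- c) + pp LE (c - x).
  by have := pp_subadd LE (- c) (c - x); rewrite addrA addNr add0r.
have h2 : pp LE (- c) = 0.
  by rewrite /pp ljle //; have := lopp c0; rewrite oppr0.
rewrite h2 add0r in h1.
have := norm_mono0 (pp_ge0 LE (- x)) h1.
move=> /le_trans /(_ (norm_pp LE (c - x))) => h; rewrite distrC in h.
by have := lt_le_trans xc h; rewrite ltxx.
Qed.

Variable P : E -> F.
Hypothesis Padd : forall x y, 0 ⊑ x -> 0 ⊑ y -> P (x + y) = P x + P y.
Hypothesis Pscale : forall (a : R) x, 0 <= a -> 0 ⊑ x -> P (a *: x) = a *: P x.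
Hypothesis Pge0 : forall x, 0 ⊑ x -> 0 ≼ P x.

Lemma Pmono' x y : 0 ⊑ x -> x ⊑ y -> P x ≼ P y.
Proof.
move=> x0 xy; have yx0 := lsub0 xy.
have -> : y = x + (y - x) by rewrite addrC subrK.
rewrite Padd //; rewrite -[X in X ≼ _]addr0; apply: laddl; exact: Pge0.
Qed.

Lemma pos_bounded : exists M, forall x, 0 ⊑ x -> `|x| <= 1 -> `|P x| <= M.
Proof.
apply/not_notP => H.
have H' (M : R) : exists x, [/\ 0 ⊑ x, `|x| <= 1 & M < `|P x|].
  apply/not_notP => nx; apply: H; exists M => x x0 x1.
  rewrite leNgt; apply/negP => hlt; apply: nx; by exists x; split.
pose w : R := 2^-1.
have w0 : 0 < w by rewrite /w invr_gt0.
have w1 : w < 1 by rewrite /w invf_lt1 // ltr1n.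
pose xs n := projT1 (cid (H' ((w ^+ n)^-1 * n%:R))).
have xsP n : [/\ 0 ⊑ xs n, `|xs n| <= 1 & (w ^+ n)^-1 * n%:R < `|P (xs n)|].
  exact: (projT2 (cid (H' ((w ^+ n)^-1 * n%:R)))).
pose y n := w ^+ n *: xs n.
have wn0 n : 0 < w ^+ n by rewrite exprn_gt0.
have y0 n : 0 ⊑ y n by apply: lscale0; [exact: ltW|case: (xsP n)].
have yn n : `|y n| <= w ^+ n.
  rewrite /y normrZ ger0_norm; last exact: ltW (wn0 n).
  rewrite -[X in _ <= X]mulr1.
  by apply: ler_wpM2l; [exact: ltW|case: (xsP n)].
have cn : cvgn [normed series y].
  apply: (@series_le_cvg _ _ (geometric 1 w)).
  - by move=> n /=.
  - by move=> n /=; rewrite mul1r ltW.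
  - by move=> n /=; rewrite mul1r.
  - by apply: is_cvg_geometric_series; rewrite ger0_norm ?ltW.
have cs : cvgn (series y) := normed_cvg cn.
set s := limn (series y).
have ser0 n : 0 ⊑ series y n.
  elim: n => [|n IH]; first by rewrite /series /= big_geq //; exact: lrefl.
  by rewrite seriesSr -[0]addr0; apply: ladd.
have ser_ge N n : (N < n)%N -> y N ⊑ series y n.
  elim: n => [//|n IH]; rewrite ltnS leq_eqVlt => /orP [/eqP ->|hN].
    by rewrite seriesSr -[X in X ⊑ _]add0r; apply: laddr.
  rewrite seriesSr -[X in X ⊑ _]addr0; apply: ladd; [exact: IH|exact: y0].
have ys N : y N ⊑ s.
  have cl : closed [set z : E | y N ⊑ z].
    have -> : [set z : E | y N ⊑ z] = (fun z => z - y N) @^-1` [set z | 0 ⊑ z].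
      apply/seteqP; split => z /=; [exact: lsub0|exact: lsub0E].
    move: cone_closed; apply: (proj1 (continuous_closedP _)).
    move=> z; apply: (@continuousB R E E (fun z => z) (fun _ => y N) z).
      exact: cvg_id.
    exact: cvg_cst.
  apply: (closed_cvg _ cl) cs.
  by near=> n; apply: ser_ge; near: n; exact: nbhs_infty_gt.
have big N : N%:R < `|P s|.
  have h1 := Pmono' (y0 N) (ys N).
  have h2 := norm_mono0 (Pge0 (y0 N)) h1.
  apply: lt_le_trans h2; rewrite /y Pscale ?ltW //; last by case: (xsP N).
  rewrite normrZ ger0_norm; last exact: ltW (wn0 N).
  have wn : w ^+ N != 0 by rewrite gt_eqF.
  by case: (xsP N) => _ _ h; rewrite -(ltr_pM2l (wn0 N)) mulrA (divff wn) mul1r in h.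
have := big (Num.truncn `|P s|).+1.
by rewrite ltNge (ltW (truncnS_gt _)).
Unshelve. all: by end_near.
Qed.

End PosBound.
Unset Implicit Arguments.
Theorem theorem2p13 (R : realType) (E F : completeNormedModType R)
  (LE : banach_lattice E) (LF : banach_lattice F) :
  AL_space LE -> reflexive_space F ->
  forall T : {linear E -> F}, continuous T ->
    order_bounded LE LF T -> seq_uaw_compact LE LF T ->
    exists S : {linear E -> F}, is_modulus LE LF T S /\ weakly_compact_op S.
Proof.
move=> _ reflF T Tc Tob _.
pose S : {linear E -> F} := HB.pack (Sf LE LF T)
  (GRing.isLinear.Build R E F *:%R (Sf LE LF T) (Sf_lin reflF Tob)).
have SE x : S x = Q LE LF T x + Q LE LF T x - T x by [].
have Spos x : bl_le LE 0 x -> bl_le LF 0 (S x).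
  move=> x0; rewrite SE (Q_pos reflF Tob x0) -addrA -[0]addr0.
  apply: ladd; first exact: (P_ge0 reflF Tob x0).
  by apply: lsub0; apply: (P_ge reflF Tob x0); exact: lrefl.
exists S; split; first split.
- move=> x x0; rewrite SE (Q_pos reflF Tob x0).
  have h : bl_le LF (T x) (P LE LF T x) by apply: (P_ge reflF Tob x0); exact: lrefl.
  apply: lsub0E; have -> : P LE LF T x + P LE LF T x - T x - T x =
     (P LE LF T x - T x) + (P LE LF T x - T x).
    by rewrite addrACA addrA.
  by rewrite -[0]addr0; apply: ladd; exact: lsub0.
- move=> x x0; rewrite SE (Q_pos reflF Tob x0).
  have := laddr (- T x) (ladd (P_ge0 reflF Tob x0) (P_ge0 reflF Tob x0)).
  by rewrite addr0 add0r.
- move=> a b; exists (S a), (S b) => x ax xb; split.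
  + by apply: lsub0E; rewrite -linearB; apply: Spos; exact: lsub0.
  + by apply: lsub0E; rewrite -linearB; apply: Spos; exact: lsub0.
- move=> U _ TU NTU x x0; rewrite SE (Q_pos reflF Tob x0).
  have half : 0 <= (2:R)^-1 by rewrite invr_ge0.
  have key : bl_le LF (P LE LF T x) ((2:R)^-1 *: (U x + T x)).
    apply: (P_le reflF Tob x0) => y y0 yx.
    have xy0 := lsub0 yx.
    have h1 : bl_le LF (T y - T (x - y)) (U x).
      have -> : U x = U y + U (x - y) by rewrite -linearD addrC subrK.
      apply: ladd; [exact: TU|exact: NTU].
    have h3 : bl_le LF (T y + T y) (U x + T x).
      by have := laddr (T x) h1; rewrite linearB opprB addrA subrK.
    have := lscale half h3.
    suff -> : (2:R)^-1 *: (T y + T y) = T y by [].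
    by rewrite -mulr2n -[T y *+ 2]scaler_nat scalerA mulVf ?scale1r // pnatr_eq0.
  have := lscale (ler0n R 2) key.
  rewrite scalerA divff ?scale1r ?pnatr_eq0 // scaler_nat mulr2n => h.
  have := laddr (- T x) h; by rewrite addrK.
have [M HM] := pos_bounded (P_add reflF Tob) (@P_scale _ _ _ _ _ reflF _ Tob) (P_ge0 reflF Tob).
have [k k0 Hk] : exists2 k : R, 0 < k & forall x, `|T x| <= k * `|x|.
  by move/linear_bounded_continuous/linear_boundedP : Tc => /pinfty_ex_gt0.
have M0 : 0 <= M by apply: le_trans (HM 0 (lrefl _ _) _); rewrite ?normr0.
pose r := (M + M) + (M + M) + k.
have r0 : 0 <= r by rewrite /r !addr_ge0 // ltW.
have Sb x : `|x| <= 1 -> `|S x| <= r.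
  move=> x1; rewrite SE.
  have hQ : `|Q LE LF T x| <= M + M.
    rewrite /Q; apply: le_trans (ler_normB _ _) _.
    apply: lerD; apply: HM; try exact: pp_ge0; try exact: np_ge0.
    - exact: le_trans (norm_pp LE x) x1.
    - exact: le_trans (norm_np LE x) x1.
  apply: le_trans (ler_normB _ _) _; rewrite /r; apply: lerD.
    by apply: le_trans (ler_normD _ _) _; exact: lerD.
  by apply: le_trans (Hk x) _; rewrite -[X in _ <= X]mulr1 ler_wpM2l // ltW.
have sub : (S @` [set x : E | `|x| <= 1] : set (@weakV R F)) `<=` Kr r.
  move=> _ [x x1 <-] f N fd N0 fN.
  apply: le_trans (fN _) _; rewrite mulrC ler_wpM2r //; exact: Sb.
rewrite /weakly_compact_op /rel_weakly_compact.
apply: (subclosed_compact _ (Kr_compact r0 reflF)).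
  exact: closed_closure.
apply: subset_trans (closureS sub) _.
exact: (@Kr_closed R F r).
Qed.
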